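(* Let the premiums $\{X_n, n\geq 1\}$ and the claims $\{Y_n, n\geq 1\}$ be sequences of nonnegative, identically distributed, independent random variables with finite expectations, and suppose the sequences $\{X_n\}$ and $\{Y_n\}$ are mutually independent. Let $r>0$ be a constant and set $I_n=r$ for all $n\geq 1$. For $u\geq 0$ define $U_0=u$, $U_n=(U_{n-1}+X_n)(1+r)-Y_n$ for $n\geq 1$, and $\Psi(u)=\mathbb{P}\big(\bigcup_{n=1}^\infty\{U_n<0\}\big)$. If there exists a positive real number $R$ satisfying $$\mathbb{E}\Big(e^{R\left(Y_1(1+r)^{-1}-X_1\right)}\Big)\leq 1,$$ then $\Psi(u)\leq e^{-Ru}$ for all $u>0$. *)

(* Defs.v *)
From HB Require Import structures.
From mathcomp Require Import all_boot all_order all_algebra.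
From mathcomp Require Import finmap.
From mathcomp Require Import all_classical all_reals all_analysis.
Set Implicit Arguments. Unset Strict Implicit. Unset Printing Implicit Defensive.
Import Order.TTheory GRing.Theory Num.Theory.
Local Open Scope classical_set_scope.
Local Open Scope ring_scope.

Definition mutually_independent d (T : measurableType d) (R : realType)
    (P : probability T R) (I : choiceType) (X : I -> T -> R) : Prop :=
  forall (J : {fset I}) (B : I -> set R),
    (forall i, i \in J -> measurable (B i)) ->
    P (\bigcap_(i in [set` J]) (X i @^-1` B i)) =
    (\prod_(i <- J) P (X i @^-1` B i))%E.

Definition identically_distributed d (T : measurableType d) (R : realType)
    (P : probability T R) (X : nat -> T -> R) : Prop :=
  forall n (B : set R), measurable B -> P (X n @^-1` B) = P (X 0%N @^-1` B).

(* Surplus process with constant interest r: U_0 = u,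
   U_{n+1} = (U_n + X_{n+1})(1+r) - Y_{n+1}; here X k, Y k stand for
   X_{k+1}, Y_{k+1} of the paper. *)
Fixpoint surplus (R : realType) (T : Type) (u r : R) (X Y : nat -> T -> R)
    (n : nat) (w : T) : R :=
  match n with
  | 0%N => u
  | k.+1 => (surplus u r X Y k w + X k w) * (1 + r) - Y k w
  end.

Definition premiums_claims (T : Type) (R : Type) (X Y : nat -> T -> R)
    (i : nat + nat) : T -> R :=
  match i with inl n => X n | inr n => Y n end.

Definition ruin_prob d (T : measurableType d) (R : realType)
    (P : probability T R) (u r : R) (X Y : nat -> T -> R) : \bar R :=
  P (\bigcup_(k in [set: nat]) [set w | surplus u r X Y k.+1 w < 0]).

(* Main.v *)
Require Import Defs.
From HB Require Import structures.
From mathcomp Require Import all_boot all_order all_algebra.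
From mathcomp Require Import finmap.
From mathcomp Require Import all_classical all_reals all_analysis.
From mathcomp Require Import measurable_realfun.
Import Order.TTheory GRing.Theory Num.Theory.
Local Open Scope classical_set_scope.
Local Open Scope ring_scope.
Set Implicit Arguments. Unset Strict Implicit. Unset Printing Implicit Defensive.

Definition pfm d d' (T : measurableType d) (T' : measurableType d') (R : realType)
  (P : probability T R) (f : T -> T') (mf : measurable_fun setT f) : set T' -> \bar R :=
  fun A => P (f @^-1` A).

Section pfm_inst.
Context d d' (T : measurableType d) (T' : measurableType d') (R : realType)
  (P : probability T R) (f : T -> T') (mf : measurable_fun setT f).
Local Open Scope ereal_scope.
Let pfm0 : pfm P mf set0 = 0.
Proof. by rewrite /pfm preimage_set0 measure0. Qed.
Let pfm_ge0 A : 0 <= pfm P mf A.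
Proof. exact: measure_ge0. Qed.
Let pfm_sa : semi_sigma_additive (pfm P mf).
Proof. exact: (@measure_semi_sigma_additive _ _ _ (pushforward P f)). Qed.
HB.instance Definition _ := isMeasure.Build _ _ _ (pfm P mf) pfm0 pfm_ge0 pfm_sa.
Let pfmT : pfm P mf setT = 1.
Proof. by rewrite /pfm preimage_setT probability_setT. Qed.
HB.instance Definition _ := Measure_isProbability.Build _ _ _ (pfm P mf) pfmT.
End pfm_inst.


Lemma gsub_meas d (T : measurableType d) (G : set (set T)) :
  G `<=` measurable -> <<s G >> `<=` measurable.
Proof. move=> Gm; apply: smallest_sub => //; exact: sigma_algebra_measurable. Qed.

Section GenInd.
Context d (T : measurableType d) (R : realType) (P : probability T R).
Variables (C D : set (set T)).
Hypotheses (CT : C setT) (DT : D setT) (Cm : C `<=` measurable) (Dm : D `<=` measurable)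
  (CI : setI_closed C) (DI : setI_closed D)
  (CD : forall A B, C A -> D B -> P (A `&` B) = (P A * P B)%E).

Local Notation gC := (g_sigma_algebraType C).
Local Notation gD := (g_sigma_algebraType D).

Let mid_C : measurable_fun setT (fun x : T => (x : gC)).
Proof. move=> _ A mA; rewrite setTI; exact: (gsub_meas Cm mA). Qed.
Let mid_D : measurable_fun setT (fun x : T => (x : gD)).
Proof. move=> _ A mA; rewrite setTI; exact: (gsub_meas Dm mA). Qed.
Let mdiag : measurable_fun setT (fun x : T => ((x : gC), (x : gD))) :=
  measurable_fun_pair mid_C mid_D.

Let PC := pfm P mid_C.
Let PD := pfm P mid_D.
Let Pdg := pfm P mdiag.

Let rect : set (set (gC * gD)) := [set (A : set gC) `*` (B : set gD) | A in C & B in D].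

Let rect_gen : measurable = <<s rect >>.
Proof.
rewrite measurable_prod_measurableType; apply/seteqP; split.
- apply: smallest_sub; first exact: smallest_sigma_algebra.
  move=> _ [A mA] [B mB] <-.
  have -> : A `*` B = (A `*` setT) `&` (setT `*` B) :> set (gC * gD).
    by rewrite -{1}(setIT A) -{1}(setTI B) setXI.
  pose Tm := g_sigma_algebraType rect.
  apply: (@measurableI _ Tm).
  + have h1 : preimage_set_system [set: gC * gD] fst C `<=` rect.
      rewrite /preimage_set_system => _ [A' CA' <-].
      by exists A' => //; exists setT => //; rewrite setTI setXT.
    have h2 : preimage_set_system [set: gC * gD] fst (<<s C >>) (A `*` [set: gD]).
      by rewrite /preimage_set_system; exists A; [exact: mA|rewrite setTI setXT].
    move: h2; rewrite -g_sigma_preimageE; exact: sub_sigma_algebra2.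
  + have h1 : preimage_set_system [set: gC * gD] snd D `<=` rect.
      rewrite /preimage_set_system => _ [B' DB' <-].
      by exists setT => //; exists B' => //; rewrite setTI setTX.
    have h2 : preimage_set_system [set: gC * gD] snd (<<s D >>) ([set: gC] `*` B).
      by rewrite /preimage_set_system; exists B; [exact: mB|rewrite setTI setTX].
    move: h2; rewrite -g_sigma_preimageE; exact: sub_sigma_algebra2.
- apply: smallest_sub; first exact: smallest_sigma_algebra.
  move=> _ [A CA] [B DB] <-; apply: sub_sigma_algebra; exists A.
    exact: sub_sigma_algebra.
  by exists B => //; exact: sub_sigma_algebra.
Qed.


Let Pdg_prod (A : set (gC * gD)) : measurable A -> Pdg A = (PC \x PD)%E A.
Proof.
apply: (measure_unique rect (fun=> setT)) => //.
- move=> _ _ [A1 CA1] [B1 DB1] <- [A2 CA2] [B2 DB2] <-; rewrite -setXI.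
  by exists (A1 `&` A2); [exact: CI|exists (B1 `&` B2); [exact: DI|]].
- by move=> _; exists setT => //; exists setT => //; rewrite setXTT.
- by apply/seteqP; split => x //= _; exists 0%N.
- move=> _ [A1 CA] [B DB] <-.
  have h : (PC \x PD)%E (A1 `*` B) = (PC A1 * PD B)%E.
    by apply: product_measure1E; exact: sub_sigma_algebra.
  transitivity (PC A1 * PD B)%E; last exact: (esym h).
  rewrite /Pdg /PC /PD /pfm /= -CD //.
- by move=> _; apply: (le_lt_trans (probability_le1 _ measurableT)); rewrite ltry.
Qed.

Lemma gen_ind (W : gC -> R) (G : gD -> R) :
  measurable_fun setT W -> measurable_fun setT G ->
  (forall x, 0 <= W x) -> (forall x, 0 <= G x) ->
  (\int[P]_x (W x * G x)%:E = \int[P]_x (W x)%:E * \int[P]_x (G x)%:E)%E.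
Proof.
move=> mW mG W0 G0.
have mf : measurable_fun setT (fun p : gC * gD => (W p.1 * G p.2)%:E).
  apply/measurable_EFinP; apply: measurable_funM.
  - exact: measurableT_comp mW measurable_fst.
  - exact: measurableT_comp mG measurable_snd.
transitivity (\int[Pdg]_p (W p.1 * G p.2)%:E)%E.
  rewrite (ge0_integral_pushforward mdiag) //=.
  by move=> ? _; rewrite lee_fin mulr_ge0.
rewrite (eq_measure_integral (PC \x PD)%E); last by move=> A mA _; exact: Pdg_prod.
rewrite fubini_tonelli1 //; last by move=> ?; rewrite lee_fin mulr_ge0.
rewrite /fubini_F /=.
have mW' : measurable_fun setT (fun x => (W x)%:E) by exact/measurable_EFinP.
have mG' : measurable_fun setT (fun x => (G x)%:E) by exact/measurable_EFinP.
transitivity (\int[pfm P mid_C]_x ((W x)%:E * \int[pfm P mid_D]_y (G y)%:E))%E.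
  apply: eq_integral => x _; rewrite -ge0_integralZl_EFin // => y _; by rewrite lee_fin.
rewrite (@ge0_integralZr _ _ _ _ _ measurableT _ mW') //; last 2 first.
- by move=> x _; rewrite lee_fin.
- by apply: integral_ge0 => x _; rewrite lee_fin.
rewrite (ge0_integral_pushforward mid_C) //; last by move=> ? _; rewrite lee_fin.
rewrite (ge0_integral_pushforward mid_D) //; last by move=> ? _; rewrite lee_fin.
Qed.
End GenInd.

Section Csys_sec.
Context d (T : measurableType d) (R : realType) (P : probability T R) (X Y : nat -> T -> R).
Hypotheses (mX : forall n, measurable_fun setT (X n)) (mY : forall n, measurable_fun setT (Y n)).
Hypothesis indep : mutually_independent P (premiums_claims X Y).
Local Notation Z := (premiums_claims X Y).

Let mZ i : measurable_fun setT (Z i). Proof. by case: i. Qed.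

Definition Csys (p : nat + nat -> Prop) : set (set T) :=
  [set A | exists J : {fset (nat + nat)}, exists B : nat + nat -> set R,
    [/\ (forall i, i \in J -> p i), (forall i, i \in J -> measurable (B i)) &
      A = \bigcap_(i in [set` J]) (Z i @^-1` B i)]].

Lemma CsysT p : Csys p setT.
Proof.
exists fset0, (fun=> setT); split => //.
by rewrite set_fset0 bigcap_set0.
Qed.

Lemma Csys_meas p : Csys p `<=` measurable.
Proof.
move=> _ [J [B [_ mB ->]]]; apply: fin_bigcap_measurable => //.
move=> i Ji; rewrite -(setTI (_ @^-1` _)); apply: mZ => //; exact: mB.
Qed.

Let mrg (J J' : {fset (nat + nat)}) (B B' : nat + nat -> set R) i :=
  (if i \in J then B i else setT) `&` (if i \in J' then B' i else setT).

Let merge J J' B B' :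
  (\bigcap_(i in [set` J]) (Z i @^-1` B i)) `&` (\bigcap_(i in [set` J']) (Z i @^-1` B' i))
  = \bigcap_(i in [set` (J `|` J')%fset]) (Z i @^-1` mrg J J' B B' i).
Proof.
apply/seteqP; split => x.
- move=> [hA hB] i /=; rewrite inE /mrg => /orP Ji; split.
  + by case: ifPn => // iJ; exact: hA.
  + by case: ifPn => // iJ; exact: hB.
- move=> h; split => i Ji.
  + by have := h i; rewrite /= inE /mrg Ji => /(_ isT) [].
  + by have := h i; rewrite /= inE /mrg Ji orbT => /(_ isT) [].
Qed.

Lemma Csys_I p : setI_closed (Csys p).
Proof.
move=> _ _ [J [B [pJ mB ->]]] [J' [B' [pJ' mB' ->]]].
exists (J `|` J')%fset, (mrg J J' B B'); split.
- by move=> i; rewrite inE => /orP[/pJ|/pJ'].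
- move=> i _; rewrite /mrg; apply: measurableI.
  + by case: ifPn => // /mB.
  + by case: ifPn => // /mB'.
- exact: merge.
Qed.

Lemma Csys_ind p p' : (forall i, p i -> p' i -> False) ->
  forall A B, Csys p A -> Csys p' B -> P (A `&` B) = (P A * P B)%E.
Proof.
move=> disj _ _ [J [B [pJ mB ->]]] [J' [B' [pJ' mB' ->]]].
rewrite merge indep; last first.
  move=> i _; rewrite /mrg; apply: measurableI.
  + by case: ifPn => // /mB.
  + by case: ifPn => // /mB'.
rewrite !indep //.
rewrite (big_fsetID _ (mem J)) /=.
congr (_ * _)%E.
- rewrite big_fset_condE; set K := [fset _ | _ in _ & _]%fset.
  have -> : K = J.
    apply/fsetP => i; rewrite !inE /=.
    by case: (boolP (i \in J)) => //=; rewrite ?andbT ?andbF.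
  apply: eq_big_seq => i Ji; congr (P _); rewrite /mrg Ji.
  case: ifPn => [iJ'|_]; last by rewrite setIT.
  by exfalso; apply: (disj i); [exact: pJ|exact: pJ'].
- rewrite big_fset_condE; set K := [fset _ | _ in _ & _]%fset.
  have -> : K = J'.
    apply/fsetP => i; rewrite !inE /=.
    case: (boolP (i \in J)) => iJ /=; rewrite ?andbT ?andbF //=.
    by symmetry; apply/negP => iJ'; exact: (disj i (pJ _ iJ) (pJ' _ iJ')).
  apply: eq_big_seq => i Ji; congr (P _); rewrite /mrg Ji.
  case: ifPn => [iJ|_]; last by rewrite setTI.
  by exfalso; apply: (disj i); [exact: pJ|exact: pJ'].
Qed.

End Csys_sec.

From mathcomp Require Import ring lra.

Definition idx (i : nat + nat) : nat := match i with inl n => n | inr n => n end.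
Definition pastp (m : nat) (i : nat + nat) : Prop := (idx i < m)%N.
Definition nowp (m : nat) (i : nat + nat) : Prop := idx i = m.

Definition Zr (T : Type) (R : realType) (X Y : nat -> T -> R) (r : R) n w : R :=
  Y n w / (1 + r) - X n w.

Fixpoint Sp (T : Type) (R : realType) (X Y : nat -> T -> R) (r : R) n w : R :=
  match n with
  | 0%N => 0
  | k.+1 => Sp X Y r k w + Zr X Y r k w / (1 + r) ^+ k
  end.

Fixpoint Mx (T : Type) (R : realType) (X Y : nat -> T -> R) (r : R) n w : R :=
  match n with
  | 0%N => 0
  | k.+1 => Num.max (Mx X Y r k w) (Sp X Y r k.+1 w)
  end.

Lemma surplusE (T : Type) (R : realType) (X Y : nat -> T -> R) (r u : R) n w :
  0 < r -> surplus u r X Y n w = (1 + r) ^+ n * (u - Sp X Y r n w).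
Proof.
move=> r0; have r1 : 1 + r != 0 by rewrite gt_eqF // ltr_wpDr // ltW.
elim: n => [|n IH] /=; first by rewrite expr0 mul1r subr0.
rewrite IH /Zr exprS.
have rn : (1 + r) ^+ n != 0 by rewrite expf_neq0.
by field; rewrite ?rn ?r1.
Qed.

Section Meas.
Context d (T : measurableType d) (R : realType) (X Y : nat -> T -> R) (r : R).
Hypotheses (mX : forall n, measurable_fun setT (X n)) (mY : forall n, measurable_fun setT (Y n)).
Local Notation Z := (premiums_claims X Y).

Lemma Z_meas (p : nat + nat -> Prop) i : p i ->
  measurable_fun (setT : set (g_sigma_algebraType (Csys X Y p)))
    (Z i : g_sigma_algebraType (Csys X Y p) -> R).
Proof.
move=> pi _ B mB; rewrite setTI; apply: sub_sigma_algebra.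
exists [fset i]%fset, (fun=> B); split => //.
- by move=> j; rewrite inE => /eqP ->.
- by rewrite set_fset1 bigcap_set1.
Qed.

Lemma Zr_meas (p : nat + nat -> Prop) n : p (inl n) -> p (inr n) ->
  measurable_fun (setT : set (g_sigma_algebraType (Csys X Y p)))
    (Zr X Y r n : g_sigma_algebraType (Csys X Y p) -> R).
Proof.
move=> pl pr; rewrite /Zr; apply: measurable_funB.
- apply: measurable_funM; first exact: (Z_meas pr).
  exact: measurable_cst.
- exact: (Z_meas pl).
Qed.

Lemma S_meas m n : (n <= m)%N ->
  measurable_fun (setT : set (g_sigma_algebraType (Csys X Y (pastp m))))
    (Sp X Y r n : g_sigma_algebraType (Csys X Y (pastp m)) -> R).
Proof.
elim: n => [|n IH] nm /=; first exact: measurable_cst.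
apply: measurable_funD; first by apply: IH; exact: ltnW.
apply: measurable_funM; last exact: measurable_cst.
by apply: Zr_meas.
Qed.

Lemma M_meas m n : (n <= m)%N ->
  measurable_fun (setT : set (g_sigma_algebraType (Csys X Y (pastp m))))
    (Mx X Y r n : g_sigma_algebraType (Csys X Y (pastp m)) -> R).
Proof.
elim: n => [|n IH] nm /=; first exact: measurable_cst.
apply: measurable_maxr; first by apply: IH; exact: ltnW.
exact: (S_meas nm).
Qed.

End Meas.

Lemma expR_conv (R : realType) (a t : R) : 0 <= a -> a <= 1 ->
  expR (a * t) <= 1 - a + a * expR t.
Proof.
move=> a0 a1; have := convex_expR (Itv01 a0 a1) t 0.
by rewrite !convRE /= mulr0 addr0 expR0 mulr1 addrC.
Qed.

Lemma lift_meas d (T : measurableType d) (R : realType) (C : set (set T)) (f : T -> R) :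
  C `<=` measurable ->
  measurable_fun (setT : set (g_sigma_algebraType C)) (f : g_sigma_algebraType C -> R) ->
  measurable_fun setT f.
Proof.
move=> Cm mf; have mid : measurable_fun setT (fun x : T => (x : g_sigma_algebraType C)).
  by move=> _ A mA; rewrite setTI; exact: (gsub_meas Cm mA).
exact: (measurableT_comp mf mid).
Qed.

Lemma id_int d (T : measurableType d) (R : realType) (P : probability T R)
  (V : nat -> T -> R) (mV : forall n, measurable_fun setT (V n)) :
  identically_distributed P V ->
  forall (f : R -> R), measurable_fun setT f -> (forall x, 0 <= f x) ->
  forall n, (\int[P]_w (f (V n w))%:E = \int[P]_w (f (V 0%N w))%:E)%E.
Proof.
move=> idV f mf f0 n.
have mf' : measurable_fun setT (fun x => (f x)%:E) by exact/measurable_EFinP.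
transitivity (\int[pfm P (mV n)]_y (f y)%:E)%E.
  rewrite (ge0_integral_pushforward (mV n)) ?preimage_setT //.
  by move=> y _; rewrite lee_fin.
rewrite (eq_measure_integral (pfm P (mV 0%N))); last by move=> A mA _; exact: idV.
rewrite (ge0_integral_pushforward (mV 0%N)) ?preimage_setT //.
by move=> y _; rewrite lee_fin.
Qed.

Section Main.
Context d (T : measurableType d) (R : realType) (P : probability T R)
  (X Y : nat -> T -> R) (r Rc u : R).
Hypotheses (mX : forall n, measurable_fun setT (X n))
  (mY : forall n, measurable_fun setT (Y n))
  (X0 : forall n w, 0 <= X n w) (Y0 : forall n w, 0 <= Y n w)
  (idX : identically_distributed P X) (idY : identically_distributed P Y)
  (indep : mutually_independent P (premiums_claims X Y))
  (r0 : 0 < r) (Rc0 : 0 < Rc) (u0 : 0 < u)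
  (hE : (\int[P]_w (expR (Rc * (Y 0%N w / (1 + r) - X 0%N w)))%:E <= 1)%E).

Let csys_gen_ind (p p' : nat + nat -> Prop) (disj : forall i, p i -> p' i -> False)
  (W : g_sigma_algebraType (Csys X Y p) -> R) (G : g_sigma_algebraType (Csys X Y p') -> R) :
  measurable_fun setT W -> measurable_fun setT G ->
  (forall x, 0 <= W x) -> (forall x, 0 <= G x) ->
  (\int[P]_x (W x * G x)%:E = \int[P]_x (W x)%:E * \int[P]_x (G x)%:E)%E.
Proof.
move=> mW mG W0 G0.
have h1 := (Csys_meas mX mY (p:=p)).
have h2 := (Csys_ind indep disj).
have h3 := (@gen_ind _ _ _ P _ _ (CsysT X Y p) (CsysT X Y p') h1 (Csys_meas mX mY (p:=p')) (@Csys_I _ _ _ X Y p) (@Csys_I _ _ _ X Y p') h2).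
exact: h3.
Qed.

Let r1 : 0 < 1 + r. Proof. by rewrite ltr_wpDr // ltW. Qed.

Let ZEsplit n : (\int[P]_w (expR (Rc * Zr X Y r n w))%:E =
  \int[P]_w (expR (Rc * (Y n w / (1 + r))))%:E * \int[P]_w (expR (- (Rc * X n w)))%:E)%E.
Proof.
rewrite -(@csys_gen_ind (fun i => i = inr n) (fun i => i = inl n)
  _ (fun w => expR (Rc * (Y n w / (1 + r)))) (fun w => expR (- (Rc * X n w)))).
- by apply: eq_integral => w _; rewrite /Zr mulrBr expRD.
- by move=> i -> .
- apply: measurableT_comp; first exact: measurable_expR.
  apply: measurable_funM; first exact: measurable_cst.
  apply: measurable_funM; last exact: measurable_cst.
  exact: (@Z_meas _ _ _ X Y _ (inr n)).
- apply: measurableT_comp; first exact: measurable_expR.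
  apply: measurable_funN.
  apply: measurable_funM; first exact: measurable_cst.
  exact: (@Z_meas _ _ _ X Y _ (inl n)).
- by move=> ?; exact: expR_ge0.
- by move=> ?; exact: expR_ge0.
Qed.

Let ZE n : (\int[P]_w (expR (Rc * Zr X Y r n w))%:E <= 1)%E.
Proof.
rewrite ZEsplit.
have mf1 : measurable_fun setT (fun y : R => expR (Rc * (y / (1 + r)))).
  apply: measurableT_comp; first exact: measurable_expR.
  apply: measurable_funM; first exact: measurable_cst.
  by apply: measurable_funM; [exact: measurable_id|exact: measurable_cst].
have mf2 : measurable_fun setT (fun y : R => expR (- (Rc * y))).
  apply: measurableT_comp; first exact: measurable_expR.
  apply: measurable_funN.
  by apply: measurable_funM; [exact: measurable_cst|exact: measurable_id].
rewrite (id_int mY idY mf1 (fun _ => expR_ge0 _)).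
rewrite (id_int mX idX mf2 (fun _ => expR_ge0 _)).
by rewrite -ZEsplit.
Qed.


Let mZr n : measurable_fun setT (Zr X Y r n).
Proof.
rewrite /Zr; apply: measurable_funB; last exact: mX.
by apply: measurable_funM; [exact: mY|exact: measurable_cst].
Qed.

Let EG n : (\int[P]_w (expR (Rc * (Zr X Y r n w / (1 + r) ^+ n)))%:E <= 1)%E.
Proof.
set a := ((1 + r) ^+ n)^-1.
have q1 : 1 <= (1 + r) ^+ n by apply: exprn_ege1; rewrite lerDl ltW.
have a0 : 0 <= a by rewrite invr_ge0 (le_trans ler01 q1).
have a1 : a <= 1 by rewrite invf_le1 // (lt_le_trans ltr01 q1).
have mE : measurable_fun setT (fun w => (expR (Rc * Zr X Y r n w))%:E).
  apply/measurable_EFinP; apply: measurableT_comp; first exact: measurable_expR.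
  by apply: measurable_funM; [exact: measurable_cst|exact: mZr].
apply: (@le_trans _ _ (\int[P]_w ((1 - a)%:E + a%:E * (expR (Rc * Zr X Y r n w))%:E))%E).
  apply: ge0_le_integral => //.
  - apply/measurable_EFinP; apply: measurableT_comp; first exact: measurable_expR.
    apply: measurable_funM; first exact: measurable_cst.
    by apply: measurable_funM; [exact: mZr|exact: measurable_cst].
  - apply: emeasurable_funD; first exact: measurable_cst.
    by apply: emeasurable_funM => //; exact: measurable_cst.
  - move=> w _; rewrite -EFinM -EFinD lee_fin.
    rewrite (_ : Rc * (Zr X Y r n w / (1 + r) ^+ n) = a * (Rc * Zr X Y r n w)).
      exact: expR_conv.
    by rewrite /a; ring.
rewrite ge0_integralD //; last 3 first.
- by move=> w _; rewrite lee_fin subr_ge0.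
- by move=> w _; rewrite mule_ge0 // lee_fin expR_ge0.
- by apply: emeasurable_funM => //; exact: measurable_cst.
rewrite integral_cst // [X in (_ * X + _)%E](_ : _ = 1%E); last exact: probability_setT.
rewrite mule1.
rewrite ge0_integralZl //.
apply: (@le_trans _ _ ((1 - a)%:E + a%:E * 1)%E).
  by apply: leeD => //; apply: lee_wpmul2l => //; exact: ZE.
by rewrite mule1 -EFinD subrK.
Qed.


Local Notation S := (Sp X Y r).
Local Notation M := (Mx X Y r).
Local Notation gT C := (g_sigma_algebraType C).

Let mS N : measurable_fun setT (S N) :=
  lift_meas (Csys_meas mX mY (p:=pastp N)) (S_meas r (leqnn N)).
Let mM N : measurable_fun setT (M N) :=
  lift_meas (Csys_meas mX mY (p:=pastp N)) (M_meas r (leqnn N)).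

Definition hh N w := if M N w <= u then expR (Rc * S N w) else expR (Rc * u).

Let mh N : measurable_fun setT (hh N).
Proof.
apply: measurable_fun_ifT.
- by apply: measurable_fun_ler; [exact: mM|exact: measurable_cst].
- apply: measurableT_comp; first exact: measurable_expR.
  by apply: measurable_funM; [exact: measurable_cst|exact: mS].
- exact: measurable_cst.
Qed.

Let step N : (\int[P]_w (hh N.+1 w)%:E <= \int[P]_w (hh N w)%:E)%E.
Proof.
pose W := fun w => if M N w <= u then expR (Rc * S N w) else 0.
pose G := fun w => expR (Rc * (Zr X Y r N w / (1 + r) ^+ N)).
pose V := fun w => if M N w <= u then 0 else expR (Rc * u).
have mW_g : measurable_fun (setT : set (gT (Csys X Y (pastp N)))) (W : gT (Csys X Y (pastp N)) -> R).
  apply: measurable_fun_ifT.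
  - by apply: measurable_fun_ler; [exact: (M_meas r (leqnn N))|exact: measurable_cst].
  - apply: measurableT_comp; first exact: measurable_expR.
    by apply: measurable_funM; [exact: measurable_cst|exact: (S_meas r (leqnn N))].
  - exact: measurable_cst.
have mG_g : measurable_fun (setT : set (gT (Csys X Y (nowp N)))) (G : gT (Csys X Y (nowp N)) -> R).
  apply: measurableT_comp; first exact: measurable_expR.
  apply: measurable_funM; first exact: measurable_cst.
  apply: measurable_funM; last exact: measurable_cst.
  exact: (@Zr_meas _ _ _ X Y r (nowp N) N erefl erefl).
have mW : measurable_fun setT W := lift_meas (Csys_meas mX mY (p:=pastp N)) mW_g.
have mG : measurable_fun setT G := lift_meas (Csys_meas mX mY (p:=nowp N)) mG_g.
have mV : measurable_fun setT V.
  apply: measurable_fun_ifT; last exact: measurable_cst; last exact: measurable_cst.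
  by apply: measurable_fun_ler; [exact: mM|exact: measurable_cst].
have W0 w : 0 <= W w by rewrite /W; case: ifPn => // _; exact: expR_ge0.
have G0 w : 0 <= G w by exact: expR_ge0.
have V0 w : 0 <= V w by rewrite /V; case: ifPn => // _; exact: expR_ge0.
have disj : forall i, pastp N i -> nowp N i -> False.
  by move=> i; rewrite /pastp /nowp => h1 h2; rewrite h2 ltnn in h1.
have pw w : hh N.+1 w <= W w * G w + V w.
  rewrite /hh /W /G /V /=.
  case: (lerP (M N w) u) => hM.
  - rewrite addr0 -expRD -mulrDr.
    case: ifPn => // hmax.
    rewrite ler_expR ler_pM2l //.
    move: hmax; rewrite ge_max hM /= -ltNge => /ltW.
    by [].
  - rewrite ge_max leNgt hM /= mul0r add0r.
    by [].
have hE' w : hh N w = W w + V w.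
  by rewrite /hh /W /V; case: ifPn => _; rewrite ?addr0 ?add0r.
apply: (@le_trans _ _ (\int[P]_w ((W w * G w)%:E + (V w)%:E))%E).
  apply: ge0_le_integral => //.
  - by move=> w _; rewrite lee_fin /hh; case: ifPn => _; exact: expR_ge0.
  - exact/measurable_EFinP.
  - apply: emeasurable_funD; apply/measurable_EFinP => //.
    exact: measurable_funM.
  - by move=> w _; rewrite -EFinD lee_fin.
rewrite ge0_integralD //; last 4 first.
- by move=> w _; rewrite lee_fin mulr_ge0.
- by apply/measurable_EFinP; exact: measurable_funM.
- by move=> w _; rewrite lee_fin.
- exact/measurable_EFinP.
rewrite (@csys_gen_ind (pastp N) (nowp N) disj W G mW_g mG_g W0 G0).
have -> : (\int[P]_w (hh N w)%:E = \int[P]_w (W w)%:E + \int[P]_w (V w)%:E)%E.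
  rewrite -ge0_integralD //; last 4 first.
  - by move=> w _; rewrite lee_fin.
  - exact/measurable_EFinP.
  - by move=> w _; rewrite lee_fin.
  - exact/measurable_EFinP.
  by apply: eq_integral => w _; rewrite hE'.
apply: leeD => //.
rewrite -[leRHS]mule1; apply: lee_wpmul2l.
- by apply: integral_ge0 => w _; rewrite lee_fin.
- exact: EG.
Qed.


Let hle N : (\int[P]_w (hh N w)%:E <= 1)%E.
Proof.
elim: N => [|N IH]; last exact: le_trans (step N) IH.
rewrite /hh /= (ltW u0) mulr0 expR0 integral_cst //.
by rewrite [X in (_ * X)%E](_ : _ = 1%E) ?mule1 //; exact: probability_setT.
Qed.

Let mE N : measurable [set w | u < M N w].
Proof.
rewrite -preimage_itvoy -[X in measurable X]setTI.
by apply: mM => //; exact: measurable_itv.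
Qed.

Let bound N : (P [set w | (u < M N w)%R] <= (expR (- (Rc * u)))%:E)%E.
Proof.
rewrite -[X in (P X <= _)%E]setIT -integral_indic //.
apply: (@le_trans _ _ (\int[P]_w (expR (- (Rc * u)) * hh N w)%:E)%E).
  apply: ge0_le_integral => //.
  - by apply/measurable_EFinP; apply: measurable_indic.
  - apply/measurable_EFinP; apply: measurable_funM; first exact: measurable_cst.
    exact: mh.
  - move=> w _; rewrite lee_fin indicE.
    case: (boolP (w \in _)) => [|_]; last first.
      by apply: mulr_ge0; [exact: expR_ge0|rewrite /hh; case: ifPn => _; exact: expR_ge0].
    rewrite inE /= /hh => uM; rewrite (leNgt (M N w)) uM /= expRN mulVf //.
    by rewrite gt_eqF // expR_gt0.
under eq_integral do rewrite EFinM.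
rewrite ge0_integralZl_EFin //; last 2 first.
- by move=> w _; rewrite lee_fin /hh; case: ifPn => _; exact: expR_ge0.
- exact/measurable_EFinP.
rewrite -[leRHS]mule1; apply: lee_wpmul2l; last exact: hle.
by rewrite lee_fin expR_ge0.
Qed.

Let SleM n w : S n w <= M n w.
Proof. by case: n => [|n] //=; rewrite le_max lexx orbT. Qed.

Let ruin_eq : \bigcup_(k in [set: nat]) [set w | surplus u r X Y k.+1 w < 0] =
  \bigcup_N [set w | u < M N w].
Proof.
have sE k w : (surplus u r X Y k w < 0) = (u < S k w).
  by rewrite surplusE // pmulr_rlt0 ?exprn_gt0 // subr_lt0.
apply/seteqP; split => w [k _].
- move=> h; have h' : u < S k.+1 w by rewrite -sE.
  by exists k.+1 => //; exact: lt_le_trans h' (SleM _ _).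
- elim: k => [|k IH] /=; first by move=> h; exfalso; move: u0; rewrite ltNge (ltW h).
  rewrite lt_max => /orP[/IH //|h].
  exists k => //; have hs : surplus u r X Y k.+1 w < 0 by rewrite sE.
  exact: hs.
Qed.

Lemma main_bound : (ruin_prob P u r X Y <= (expR (- (Rc * u)))%:E)%E.
Proof.
rewrite /ruin_prob ruin_eq.
have nd : {homo (fun N => [set w | u < M N w]) : n m / (n <= m)%N >-> (n <= m)%O}.
  apply/nondecreasing_seqP => n; apply/subsetPset => w /= h.
  by rewrite lt_max h.
have mU : measurable (\bigcup_N [set w | u < M N w]) by apply: bigcupT_measurable.
have hc := @nondecreasing_cvg_mu _ _ _ P (fun N => [set w | u < M N w]) mE mU nd.
rewrite -(cvg_lim (@ereal_hausdorff R) hc).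
apply: lime_le; first by apply/cvg_ex; eexists; exact: hc.
by apply: nearW => N; exact: bound.
Qed.

End Main.

Unset Implicit Arguments. Set Strict Implicit.

Theorem corollary3p3 (d : measure_display) (T : measurableType d)
  (R : realType) (P : probability T R) (X Y : nat -> T -> R) (r Rc : R) :
  (forall n, measurable_fun setT (X n)) ->
  (forall n, measurable_fun setT (Y n)) ->
  (forall n w, 0 <= X n w) ->
  (forall n w, 0 <= Y n w) ->
  (forall n, P.-integrable setT (EFin \o X n)) ->
  (forall n, P.-integrable setT (EFin \o Y n)) ->
  identically_distributed P X ->
  identically_distributed P Y ->
  mutually_independent P (premiums_claims X Y) ->
  0 < r ->
  0 < Rc ->
  (\int[P]_w (expR (Rc * (Y 0%N w / (1 + r) - X 0%N w)))%:E <= 1)%E ->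
  forall u : R, 0 < u -> (ruin_prob P u r X Y <= (expR (- (Rc * u)))%:E)%E.
Proof.
move=> mX mY _ _ _ _ idX idY ind r0 Rc0 hE u u0.
exact: (main_bound mX mY idX idY ind r0 Rc0 u0 hE).
Qed.
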